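(* Let $G=(V,E)$ be a graph and let $\hat{\mathcal{C}}$ be one of the sets $\widehat{\mathrm{TH}}(G):=\{\hat X\in\mathbb{S}^{\{0\}\cup V}_+ : \hat X_{00}=1,\ \hat X_{ii}=\hat X_{0i}\ \forall i\in V,\ \hat X_{ij}=0\ \forall ij\in E\}$, $\widehat{\mathrm{TH}}'(G):=\{\hat X\in\widehat{\mathrm{TH}}(G) : \hat X_{ij}\ge 0\ \forall ij\in\binom{V}{2}\setminus E\}$, or $\widehat{\mathrm{TH}}^+(G):=\{\hat X\in\mathbb{S}^{\{0\}\cup V}_+ : \hat X_{00}=1,\ \hat X_{ii}=\hat X_{0i}\ \forall i\in V,\ \hat X_{ij}\le 0\ \forall ij\in E\}$. Then a point $\hat X$ of $\hat{\mathcal{C}}$ is a vertex of $\hat{\mathcal{C}}$ if and only if $\operatorname{rank}(\hat X)=1$. Thus the vertices of $\hat{\mathcal{C}}$ are precisely the matrices $(1\oplus\chi^S)(1\oplus\chi^S)^{\mathsf T}$ where $S\subseteq V$ is a stable set of $G$.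
   Context: $0$ is a new index not in $V$; $\mathbb{S}^{W}_+$ denotes real symmetric positive semidefinite matrices indexed by $W$, with trace inner product. $\chi^S\in\{0,1\}^V$ is the incidence vector of $S$, and $1\oplus\chi^S\in\mathbb{R}^{\{0\}\cup V}$ has $0$-entry $1$. For a convex set $\mathcal{C}$ in a finite-dimensional space $\mathbb{E}$ and $\bar x\in\mathcal{C}$, the normal cone is $N_{\mathcal{C}}(\bar x):=\{c : \langle c,x\rangle\le\langle c,\bar x\rangle\ \forall x\in\mathcal{C}\}$; $\bar x$ is a vertex if $\dim N_{\mathcal{C}}(\bar x)=\dim\mathbb{E}$. *)

(* Defs.v *)
From HB Require Import structures.
From mathcomp Require Import all_boot all_order all_algebra.
From mathcomp Require Import reals.
Set Implicit Arguments. Unset Strict Implicit. Unset Printing Implicit Defensive.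
Import Order.TTheory GRing.Theory Num.Theory.
Local Open Scope ring_scope.

(* Vertex set V = 'I_n; the extra index 0 is ord0 of 'I_n.+1 and
   vertex i : 'I_n is represented by lift ord0 i. *)
Definition vtx {n : nat} (i : 'I_n) : 'I_n.+1 := lift ord0 i.

Definition simple_graph {n : nat} (e : rel 'I_n) : Prop :=
  (forall i j, e i j = e j i) /\ (forall i, ~~ e i i).

Definition stable_set {n : nat} (e : rel 'I_n) (S : {set 'I_n}) : Prop :=
  forall i j, i \in S -> j \in S -> ~~ e i j.

Definition symmetricmx {R : realType} {m : nat} (A : 'M[R]_m) : Prop := A^T = A.

Definition psdmx {R : realType} {m : nat} (A : 'M[R]_m) : Prop :=
  symmetricmx A /\ forall v : 'cV[R]_m, 0 <= (v^T *m A *m v) 0 0.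

Definition tr_inner {R : realType} {m : nat} (C X : 'M[R]_m) : R := \tr (C^T *m X).

Definition TH_hat {R : realType} {n : nat} (e : rel 'I_n) (X : 'M[R]_n.+1) : Prop :=
  [/\ psdmx X, X ord0 ord0 = 1,
      (forall i : 'I_n, X (vtx i) (vtx i) = X ord0 (vtx i))
    & (forall i j : 'I_n, e i j -> X (vtx i) (vtx j) = 0)].

Definition TH_hat' {R : realType} {n : nat} (e : rel 'I_n) (X : 'M[R]_n.+1) : Prop :=
  TH_hat e X /\
  (forall i j : 'I_n, i != j -> ~~ e i j -> 0 <= X (vtx i) (vtx j)).

Definition TH_hat_plus {R : realType} {n : nat} (e : rel 'I_n) (X : 'M[R]_n.+1) : Prop :=
  [/\ psdmx X, X ord0 ord0 = 1,
      (forall i : 'I_n, X (vtx i) (vtx i) = X ord0 (vtx i))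
    & (forall i j : 'I_n, e i j -> X (vtx i) (vtx j) <= 0)].

Inductive THkind := KTH | KTHprime | KTHplus.

Definition THset {R : realType} {n : nat} (k : THkind) (e : rel 'I_n) : 'M[R]_n.+1 -> Prop :=
  match k with
  | KTH => TH_hat e
  | KTHprime => TH_hat' e
  | KTHplus => TH_hat_plus e
  end.

Definition normal_cone {R : realType} {m : nat} (C : 'M[R]_m -> Prop) (Xb : 'M[R]_m)
  (c : 'M[R]_m) : Prop :=
  symmetricmx c /\ forall X, C X -> tr_inner c X <= tr_inner c Xb.

(* Xb is a vertex of C iff dim N_C(Xb) = dim E, where E = symmetric matrices.
   Since N_C(Xb) is a subset of E, this says: the linear span of N_C(Xb)
   is all of E, i.e. every symmetric matrix is a finite linear combination
   of elements of the normal cone. *)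
Definition is_vertex {R : realType} {m : nat} (C : 'M[R]_m -> Prop) (Xb : 'M[R]_m) : Prop :=
  C Xb /\
  forall A : 'M[R]_m, symmetricmx A ->
    exists s : seq 'M[R]_m, (forall c, c \in s -> normal_cone C Xb c) /\ A \in <<s>>%VS.

Definition one_chi {R : realType} {n : nat} (S : {set 'I_n}) : 'cV[R]_n.+1 :=
  \col_(k < n.+1) (if unlift ord0 k is Some j then (j \in S)%:R else 1).

(* Main.v *)
Require Import Defs.
From HB Require Import structures.
From mathcomp Require Import all_boot all_order all_algebra.
From mathcomp Require Import reals.
From mathcomp Require Import ring lra.
Import Order.TTheory GRing.Theory Num.Theory.
Local Open Scope ring_scope.
Set Implicit Arguments. Unset Strict Implicit. Unset Printing Implicit Defensive.

Section Basic.
Variable R : realType.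
Variable m : nat.
Implicit Types X A c : 'M[R]_m.

Lemma symE X : Defs.symmetricmx X -> forall a b, X a b = X b a.
Proof. by move=> h a b; rewrite -{1}h mxE. Qed.

Definition qf X (u w : 'cV[R]_m) := (u^T *m X *m w) 0 0.

Lemma qfDl X u1 u2 w : qf X (u1 + u2) w = qf X u1 w + qf X u2 w.
Proof. by rewrite /qf raddfD /= !mulmxDl mxE. Qed.
Lemma qfDr X u w1 w2 : qf X u (w1 + w2) = qf X u w1 + qf X u w2.
Proof. by rewrite /qf !mulmxDr mxE. Qed.
Lemma qfZl X a u w : qf X (a *: u) w = a * qf X u w.
Proof. by rewrite /qf linearZ /= -!scalemxAl mxE. Qed.
Lemma qfZr X a u w : qf X u (a *: w) = a * qf X u w.
Proof. by rewrite /qf -!scalemxAr mxE. Qed.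
Lemma qfdelta X a b : qf X (delta_mx a 0) (delta_mx b 0) = X a b.
Proof. by rewrite /qf trmx_delta -rowE -colE !mxE. Qed.

Definition v3 (a b l : 'I_m) (x y z : R) : 'cV[R]_m :=
  x *: delta_mx a 0 + y *: delta_mx b 0 + z *: delta_mx l 0.

Lemma qf_v3 X (a b l : 'I_m) (x y z : R) : Defs.symmetricmx X ->
  qf X (v3 a b l x y z) (v3 a b l x y z) =
  x^+2 * X a a + y^+2 * X b b + z^+2 * X l l
  + 2 * x * y * X a b + 2 * x * z * X a l + 2 * y * z * X b l.
Proof.
move=> hs; rewrite /v3 !(qfDl, qfDr, qfZl, qfZr) !qfdelta.
rewrite (symE hs b a) (symE hs l a) (symE hs l b); ring.
Qed.

Lemma psd_v3 X (a b l : 'I_m) (x y z : R) : psdmx X ->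
  0 <= x^+2 * X a a + y^+2 * X b b + z^+2 * X l l
  + 2 * x * y * X a b + 2 * x * z * X a l + 2 * y * z * X b l.
Proof. by case=> hs hp; rewrite -qf_v3 //; apply: hp. Qed.

Lemma tr_innerE c X : tr_inner c X = \sum_a \sum_b c a b * X a b.
Proof.
rewrite /tr_inner /mxtrace exchange_big /=; apply: eq_bigr => a _.
rewrite mxE; apply: eq_bigr => b _; by rewrite mxE.
Qed.

Lemma tr_innerDl c1 c2 X : tr_inner (c1 + c2) X = tr_inner c1 X + tr_inner c2 X.
Proof. by rewrite /tr_inner raddfD /= mulmxDl mxtraceD. Qed.
Lemma tr_innerZl a c X : tr_inner (a *: c) X = a * tr_inner c X.
Proof. by rewrite /tr_inner linearZ /= -scalemxAl mxtraceZ. Qed.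
Lemma tr_innerDr c X1 X2 : tr_inner c (X1 + X2) = tr_inner c X1 + tr_inner c X2.
Proof. by rewrite /tr_inner mulmxDr mxtraceD. Qed.
Lemma tr_innerZr a c X : tr_inner c (a *: X) = a * tr_inner c X.
Proof. by rewrite /tr_inner -scalemxAr mxtraceZ. Qed.
Lemma tr_innerNl c X : tr_inner (- c) X = - tr_inner c X.
Proof. by rewrite -scaleN1r tr_innerZl mulN1r. Qed.
Lemma tr_innerNr c X : tr_inner c (- X) = - tr_inner c X.
Proof. by rewrite -scaleN1r tr_innerZr mulN1r. Qed.

Lemma tr_inner0l X : tr_inner 0 X = 0.
Proof. by rewrite /tr_inner linear0 mul0mx mxtrace0. Qed.

Lemma tr_inner_ge X a b : X a b ^+ 2 <= tr_inner X X.
Proof.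
rewrite tr_innerE (bigD1 a) //= (bigD1 b) //= -expr2 -addrA lerDl.
apply: addr_ge0; first by apply: sumr_ge0 => i _; rewrite -expr2 sqr_ge0.
by apply: sumr_ge0 => i _; apply: sumr_ge0 => j _; rewrite -expr2 sqr_ge0.
Qed.

Lemma tr_inner_sum p (F : 'I_p -> 'M[R]_m) X :
  tr_inner (\sum_i F i) X = \sum_i tr_inner (F i) X.
Proof.
by elim/big_rec2: _ => [|i y1 y2 _ <-]; rewrite ?tr_inner0l ?tr_innerDl.
Qed.

Lemma span_orth (s : seq 'M[R]_m) D v :
  (forall c, c \in s -> tr_inner c D = 0) -> v \in <<s>>%VS -> tr_inner v D = 0.
Proof.
move=> h hv; rewrite (coord_span (X := in_tuple s) hv) tr_inner_sum.
apply: big1 => i _; rewrite tr_innerZl h ?mulr0 //.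
by apply: mem_nth; rewrite /= ltn_ord.
Qed.
End Basic.
Section Dset.
Variable R : realType.
Variable n : nat.
Implicit Types X : 'M[R]_n.+1.
Local Notation o := (ord0 : 'I_n.+1).

Definition Dset X := [/\ psdmx X, X o o = 1 & forall a, X a a = X o a].

Lemma THset_D (k : THkind) (e : rel 'I_n) X : THset k e X -> Dset X.
Proof.
have H : forall X, psdmx X -> X o o = 1 -> (forall i, X (vtx i) (vtx i) = X o (vtx i)) -> Dset X.
  move=> Y h1 h2 h3; split => // a; case: (unliftP o a) => [i ->|->] //; exact: h3.
by case: k => /=; [case| case=> [[]] | case] => *; apply: H.
Qed.

Lemma D_sym X : Dset X -> forall a b, X a b = X b a.
Proof. by case=> [[hs _]] _ _; apply: symE. Qed.

Lemma D_diag01 X a : Dset X -> 0 <= X o a <= 1.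
Proof.
case=> hp h0 hd; have := psd_v3 o a a (- X o a) 1 0 hp.
rewrite hd h0 !expr0n /= !mul0r !mulr0 !addr0 => h.
apply/andP; split; nra.
Qed.

Lemma D_key X a b : Dset X ->
  `|X a b - X o a * X o b| <= (X o a - X o a ^+ 2 + X o b - X o b ^+ 2) / 2.
Proof.
move=> hD; case: (hD) => hp h0 hd.
have h1 := psd_v3 o a b (- (X o a + X o b)) 1 1 hp.
have h2 := psd_v3 o a b (- (X o a - X o b)) 1 (-1) hp.
rewrite !hd h0 in h1 h2.
rewrite ler_norml; apply/andP; split; nra.
Qed.

Lemma D_zero X a b : Dset X -> X b b = 0 -> X a b = 0.
Proof.
case=> hp h0 hd hb; apply/eqP/negP => /negP nz.
have ha : 0 <= X a a by have := psd_v3 a a a 1 0 0 hp; rewrite !expr0n /=; nra.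
have := psd_v3 a b b 1 (- (X a a + 1) / (2 * X a b)) 0 hp.
rewrite hb !expr0n /= !mul0r !mulr0 !addr0.
have -> : 2 * 1 * (- (X a a + 1) / (2 * X a b)) * X a b = - (X a a + 1).
  by field; rewrite nz.
lra.
Qed.
End Dset.
Section Rank1.
Variable R : realType.
Variable n : nat.
Implicit Types X : 'M[R]_n.+1.
Local Notation o := (ord0 : 'I_n.+1).

Lemma rank_outer (u : 'cV[R]_n.+1) : u o 0 = 1 -> \rank (u *m u^T) = 1%N.
Proof.
move=> hu; apply/eqP; rewrite eqn_leq; apply/andP; split.
  exact: leq_trans (mxrankM_maxl _ _) (rank_leq_col u).
rewrite lt0n mxrank_eq0; apply/eqP => /matrixP /(_ o o).
rewrite !mxE big_ord1 mxE hu mulr1 => /eqP; by rewrite oner_eq0.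
Qed.

Lemma outerE (u : 'cV[R]_n.+1) a b : (u *m u^T) a b = u a 0 * u b 0.
Proof. by rewrite !mxE big_ord1 mxE. Qed.

Lemma rank1_prod X : Dset X -> \rank X = 1%N -> forall a b, X a b = X o a * X o b.
Proof.
move=> hD hr.
have hpid : pid_mx 1 = delta_mx o o :> 'M[R]_n.+1.
  apply/matrixP => i j; rewrite !mxE.
  by case: i j => [[|i] ?] [[|j] ?] //=; rewrite andbF.
have E := mulmx_ebase X; rewrite hr hpid in E.
have {}E : X = (col_ebase X *m delta_mx o (0 : 'I_1)) *m (delta_mx 0 o *m row_ebase X).
  by rewrite mulmxA -(mulmxA _ (delta_mx o 0)) mul_delta_mx E.
set u := col_ebase X *m _ in E; set w := delta_mx _ _ *m _ in E.
have XE : forall a b, X a b = u a 0 * w 0 b by move=> a b; rewrite E mxE big_ord1.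
move=> a b; case: (hD) => [[hsy _]] h0 _.
have : X a b * X o o = X a o * X o b by rewrite !XE; ring.
by rewrite h0 mulr1 (symE hsy a o).
Qed.

Lemma D_all01 X : Dset X -> (forall a, X o a = 0 \/ X o a = 1) ->
  forall a b, X a b = X o a * X o b.
Proof.
move=> hD h a b; have hk := D_key a b hD.
have h0 : (X o a - X o a ^+ 2 + X o b - X o b ^+ 2) / 2 = 0.
  by case: (h a) => ->; case: (h b) => ->; rewrite ?expr0n ?expr1n /=; lra.
by rewrite h0 normr_le0 subr_eq0 in hk; apply/eqP.
Qed.
End Rank1.
Section Vert.
Variable R : realType.
Variable n : nat.
Implicit Types X Z : 'M[R]_n.+1.
Local Notation o := (ord0 : 'I_n.+1).

Lemma term_le_sum (F : 'I_n.+1 -> R) a : (forall i, 0 <= F i) -> F a <= \sum_i F i.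
Proof.
move=> h; rewrite (bigD1 a) //= lerDl; exact: sumr_ge0.
Qed.

Lemma pt_bound (xa xb da db z : R) :
  (xa = 0 \/ xa = 1) -> (xb = 0 \/ xb = 1) ->
  0 <= da <= 1 -> 0 <= db <= 1 ->
  `|z - da * db| <= (da - da ^+ 2 + db - db ^+ 2) / 2 ->
  `|z - xa * xb| <= 3 / 2 * ((2 * xa - 1) * (xa - da) + (2 * xb - 1) * (xb - db)).
Proof.
move=> ha hb /andP[ha0 ha1] /andP[hb0 hb1]; rewrite !ler_norml => /andP[h1 h2].
by apply/andP; case: ha => ->; case: hb => ->; split; nra.
Qed.

Lemma vertex_of_01 (C : 'M[R]_n.+1 -> Prop) Xb :
  (forall Z, C Z -> Dset Z) -> C Xb -> (forall a, Xb o a = 0 \/ Xb o a = 1) ->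
  is_vertex C Xb.
Proof.
move=> hCD hC h01; have hDb := hCD _ hC.
have hXb := D_all01 hDb h01.
pose x a := Xb o a.
pose sg := \row_a (2 * x a - 1).
pose c0 := diag_mx sg.
have c0E : forall Z, tr_inner c0 Z = \sum_a (2 * x a - 1) * Z a a.
  move=> Z; rewrite /tr_inner tr_diag_mx mul_diag_mx /mxtrace.
  by apply: eq_bigr => a _; rewrite !mxE.
pose Dl Z := tr_inner c0 Xb - tr_inner c0 Z.
have DlE : forall Z, Dset Z -> Dl Z = \sum_a (2 * x a - 1) * (x a - Z o a).
  move=> Z [_ _ hd]; rewrite /Dl !c0E -sumrB; apply: eq_bigr => a _.
  case: hDb => _ _ hdb; rewrite hd hdb /x; ring.
have uge0 : forall Z a, Dset Z -> 0 <= (2 * x a - 1) * (x a - Z o a).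
  move=> Z a hZ; have := D_diag01 a hZ; rewrite /x.
  by case: (h01 a) => -> /andP[h1 h2]; nra.
have bnd : forall Z, Dset Z -> forall a b, `|Z a b - Xb a b| <= 3 * Dl Z.
  move=> Z hZ a b; rewrite hXb (DlE _ hZ).
  apply: le_trans (pt_bound (h01 a) (h01 b) (D_diag01 a hZ) (D_diag01 b hZ) (D_key a b hZ)) _.
  rewrite -/(x a) -/(x b).
  have ha := term_le_sum a (fun i => uge0 Z i hZ).
  have hb := term_le_sum b (fun i => uge0 Z i hZ).
  lra.
have Dge0 : forall Z, Dset Z -> 0 <= Dl Z.
  by move=> Z hZ; rewrite (DlE _ hZ); apply: sumr_ge0 => a _; apply: uge0.
split => // A hA.
pose SA := \sum_a \sum_b `|A a b|.
have SA0 : 0 <= SA by apply: sumr_ge0 => a _; apply: sumr_ge0 => b _.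
pose t := (1 + 3 * SA)^-1.
have t0 : 0 < 1 + 3 * SA by lra.
pose c1 := c0 + t *: A.
exists [:: c0; c1]; split.
  move=> c; rewrite !inE => /orP [/eqP ->|/eqP ->].
    split; first by rewrite /Defs.symmetricmx tr_diag_mx.
    move=> Z hZ; have := Dge0 Z (hCD _ hZ); rewrite /Dl; lra.
  split.
    apply/matrixP => i j; rewrite /c1 !mxE (symE hA i j); congr (_ + _); by case: (eqVneq i j) => [->|h]; rewrite ?eqxx // eq_sym (negPf h).
  move=> Z hZ; have hZD := hCD _ hZ.
  rewrite /c1 !tr_innerDl !tr_innerZl.
  have hAZ : tr_inner A Z - tr_inner A Xb <= SA * (3 * Dl Z).
    rewrite -tr_innerNr -tr_innerDr tr_innerE /SA mulr_suml.
    apply: ler_sum => a _; rewrite mulr_suml; apply: ler_sum => b _.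
    rewrite !mxE; apply: le_trans (ler_norm _) _; rewrite normrM.
    by apply: ler_wpM2l => //; apply: bnd.
  have ht : t * (SA * (3 * Dl Z)) <= Dl Z.
    have ht1 : 3 * SA * t <= 1 by rewrite ler_pdivrMr // mul1r; lra.
    have := ler_wpM2r (Dge0 Z hZD) ht1; rewrite mul1r.
    by have -> : t * (SA * (3 * Dl Z)) = 3 * SA * t * Dl Z by ring.
  have htp : 0 <= t by rewrite invr_ge0; lra.
  have := ler_wpM2l htp hAZ; rewrite /Dl in ht *; nra.
have -> : A = (1 + 3 * SA) *: (c1 - c0).
  by rewrite /c1 addrAC subrr add0r scalerA divff ?scale1r // gt_eqF.
apply: memvZ; apply: memvB; apply: memv_span; rewrite !inE eqxx ?orbT //.
Qed.
End Vert.
Section Quad.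
Variable R : realType.

Lemma quad_aux (a b eps : R) : 0 < a -> 0 < eps ->
  exists t, 0 < t < eps /\ 0 < a * t + b * t ^+ 2.
Proof.
move=> ha he; set den := 2 * (a + eps * `|b|).
have hb := normr_ge0 b; have hbb : - `|b| <= b by rewrite lerNl ler_normr lexx orbT.
have hden : 0 < den by rewrite /den; nra.
set t := eps * a / den.
have htd : t * den = eps * a by rewrite /t mulfVK // gt_eqF.
have ht : 0 < t by rewrite /t divr_gt0 // mulr_gt0.
exists t; split.
  apply/andP; split => //.
  have : t * den < eps * den by rewrite htd /den; nra.
  by rewrite ltr_pM2r.
have s3 : `|b| * t <= a / 2.
  rewrite ler_pdivlMr //.
  have e1 : `|b| * t * 2 * den = 2 * `|b| * (eps * a) by rewrite -htd; ring.
  have : `|b| * t * 2 * den <= a * den by rewrite e1 /den; nra.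
  by rewrite ler_pM2r.
nra.
Qed.

Lemma quad0 (al be eps : R) : 0 < eps ->
  (forall t, `|t| < eps -> al * t + be * t ^+ 2 <= 0) -> al = 0.
Proof.
move=> he h; apply/eqP/negP => /negP hne.
have ha : 0 < `|al| by rewrite normr_gt0.
have [t [/andP[t0 te] hpos]] := quad_aux be ha he.
case: (ltrgtP al 0) => hs; last by rewrite hs eqxx in hne.
  have := h (- t); rewrite normrN gtr0_norm // => /(_ te).
  rewrite ltr0_norm // in hpos; nra.
have := h t; rewrite gtr0_norm // => /(_ te).
rewrite gtr0_norm // in hpos; nra.
Qed.
End Quad.
Section Curve.
Variable R : realType.

Lemma mul_delta_r m (A : 'M[R]_m) (i j a b : 'I_m) :
  (A *m delta_mx i j) a b = A a i * (j == b)%:R.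
Proof.
rewrite mxE (bigD1 i) //= big1 ?addr0; first by rewrite mxE eqxx /= eq_sym.
by move=> u hu; rewrite mxE (negPf hu) mulr0.
Qed.

Lemma mul_delta_l m (A : 'M[R]_m) (i j a b : 'I_m) :
  (delta_mx i j *m A) a b = (a == i)%:R * A j b.
Proof.
rewrite mxE (bigD1 j) //= big1 ?addr0; first by rewrite mxE eqxx andbT.
by move=> u hu; rewrite mxE (negPf hu) andbF mul0r.
Qed.

Lemma psd_cong m (M X : 'M[R]_m) : psdmx X -> psdmx (M^T *m X *m M).
Proof.
case=> hs hp; split.
  by rewrite /Defs.symmetricmx !trmx_mul trmxK hs mulmxA.
move=> v; have := hp (M *m v); rewrite trmx_mul !mulmxA => h.
by rewrite -!mulmxA in h *; rewrite !mulmxA in h *.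
Qed.

Lemma psd_scale m c (X : 'M[R]_m) : 0 <= c -> psdmx X -> psdmx (c *: X).
Proof.
move=> hc [hs hp]; split.
  by apply/matrixP => a b; rewrite !mxE (symE hs a b).
move=> v; rewrite -scalemxAr -scalemxAl mxE; exact: mulr_ge0.
Qed.
End Curve.
Section NotVertex.
Variable R : realType.
Variable n : nat.
Local Notation o := (ord0 : 'I_n.+1).

Lemma addmxE' m (M1 M2 : 'M[R]_m) a b : (M1 + M2) a b = M1 a b + M2 a b.
Proof. by rewrite mxE. Qed.

Lemma not_vertex (k : THkind) (e : rel 'I_n) (X : 'M[R]_n.+1) :
  THset k e X -> \rank X != 1%N -> ~ is_vertex (THset k e) X.
Proof.
move=> hX hr [_ hv].
have hD := THset_D hX; case: (hD) => hp h0 hd.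
have hs := symE (proj1 hp).
have [kk /andP[hk0 hk1]] : exists kk, 0 < X o kk < 1.
  case: (boolP [exists a, (X o a != 0) && (X o a != 1)]).
    move/existsP => [a /andP [h1 h2]]; exists a.
    by have /andP[l1 l2] := D_diag01 a hD; rewrite lt_neqAle eq_sym h1 l1 lt_neqAle h2 l2.
  rewrite negb_exists => /forallP hall; exfalso; move/eqP: hr; apply.
  have h01 : forall a, X o a = 0 \/ X o a = 1.
    move=> a; have := hall a; rewrite negb_and !negbK => /orP[/eqP->|/eqP->]; auto.
  have hXE := D_all01 hD h01.
  have -> : X = (\col_a X o a) *m (\col_a X o a)^T.
    by apply/matrixP => a b; rewrite outerE !mxE hXE.
  by apply: rank_outer; rewrite mxE.
set d := X o kk in hk0 hk1.
have kko : kk != o by apply/eqP => hko; move: hk1; rewrite /d hko h0 ltxx.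
pose nu := \row_a (if (a == o) || (X o a == 0) then 0 else X kk a / X o a).
have nuo : nu 0 o = 0 by rewrite mxE eqxx.
have nud : forall a, a != o -> nu 0 a * X o a = X kk a.
  move=> a ha; rewrite mxE (negPf ha) /=; case: eqP => h.
    by rewrite h mulr0; symmetry; apply: D_zero => //; rewrite hd.
  by rewrite mulfVK //; apply/eqP.
pose N := diag_mx nu + delta_mx kk o.
pose NT := diag_mx nu + delta_mx o kk.
have NTE : N^T = NT.
  apply/matrixP => a b; rewrite !mxE andbC; congr (_ + _).
  by case: (eqVneq a b) => [->|h]; rewrite ?eqxx // eq_sym (negPf h).
have mulN : forall (A : 'M[R]_n.+1) (a b : 'I_n.+1), (A *m N) a b = A a b * nu 0 b + A a kk * (o == b)%:R.
  by move=> A a b; rewrite mulmxDr addmxE' mul_delta_r mul_mx_diag mxE.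
have mulNT : forall (A : 'M[R]_n.+1) (a b : 'I_n.+1), (NT *m A) a b = nu 0 a * A a b + (a == o)%:R * A kk b.
  by move=> A a b; rewrite mulmxDl addmxE' mul_delta_l mul_diag_mx mxE.
pose P1 := X *m N + NT *m X.
pose P2 := NT *m X *m N.
pose P (t : R) := X + t *: P1 + t ^+ 2 *: P2.
have Pcong : forall t, P t = (1%:M + t *: N)^T *m X *m (1%:M + t *: N).
  move=> t; have -> : (1%:M + t *: N)^T = 1%:M + t *: NT.
    by apply/matrixP => a b; rewrite -NTE !mxE eq_sym.
  rewrite !(mulmxDl, mulmxDr, mul1mx, mulmx1) -!scalemxAl -!scalemxAr scalerA.
  rewrite /P /P1 /P2 scalerDr expr2 !addrA; congr (_ + _).
  by rewrite addrAC.
have P1E : forall a b, P1 a b =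
    X a b * nu 0 b + X a kk * (o == b)%:R + (nu 0 a * X a b + (a == o)%:R * X kk b).
  by move=> a b; rewrite addmxE' mulN mulNT.
have P2E : forall a b, P2 a b =
    (nu 0 a * X a b + (a == o)%:R * X kk b) * nu 0 b
    + (nu 0 a * X a kk + (a == o)%:R * X kk kk) * (o == b)%:R.
  by move=> a b; rewrite /P2 mulN !mulNT.
have PE : forall t a b, P t a b = X a b + t * P1 a b + t ^+ 2 * P2 a b.
  by move=> t a b; rewrite !mxE.

have neo : forall a, a != o -> (a == o) = false /\ (o == a) = false.
  by move=> a ha; rewrite (negPf ha) eq_sym (negPf ha).
have E1 : forall t a b, a != o -> b != o ->
    P t a b = (1 + t * nu 0 a) * (1 + t * nu 0 b) * X a b.
  move=> t a b ha hb; have [ha1 ha2] := neo a ha; have [hb1 hb2] := neo b hb.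
  rewrite PE P1E P2E ha1 hb2 /=; ring.
have E2 : forall t b, b != o -> P t o b = (X o b + t * X kk b) * (1 + t * nu 0 b).
  move=> t b hb; have [hb1 hb2] := neo b hb.
  rewrite PE P1E P2E hb2 nuo eqxx /=; ring.
have E3 : forall t, P t o o = 1 + 2 * d * t + d * t ^+ 2.
  move=> t; rewrite PE P1E P2E nuo eqxx h0 /= (hs kk o) hd /d; ring.
have E4 : forall t b, b != o -> P t b b = P t o b.
  move=> t b hb; rewrite E1 // E2 // -nud // -hd; ring.
have qpos : forall t, 0 < P t o o.
  move=> t; rewrite E3; have := sqr_ge0 (1 + t); nra.
pose K := 1 + \sum_b `|nu 0 b|.
have K1 : 1 <= K by rewrite /K lerDl; apply: sumr_ge0 => b _.
pose eps := K^-1.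
have eps0 : 0 < eps by rewrite invr_gt0; lra.
have nupos : forall t b, `|t| < eps -> 0 < 1 + t * nu 0 b.
  move=> t b ht.
  have hb : `|nu 0 b| <= K.
    rewrite /K; apply: le_trans (term_le_sum (F := fun b => `|nu 0 b|) b _) _ => //.
    by rewrite lerDr.
  have htK : `|t| * K < 1 by rewrite -ltr_pdivlMr ?mul1r //; lra.
  have : `|t * nu 0 b| < 1.
    rewrite normrM; apply: le_lt_trans htK; apply: ler_wpM2l => //.
  rewrite ltr_norml => /andP[l1 _]; lra.
pose Xt t := (P t o o)^-1 *: P t.
have XtE : forall t a b, Xt t a b = (P t o o)^-1 * P t a b by move=> t a b; rewrite mxE.
have Xtpsd : forall t, psdmx (Xt t).
  move=> t; apply: psd_scale; first by rewrite invr_ge0 ltW.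
  rewrite Pcong; exact: psd_cong.
have Xt00 : forall t, Xt t o o = 1 by move=> t; rewrite XtE mulVf // gt_eqF.
have vo : forall i, vtx i != o by move=> i; rewrite eq_sym neq_lift.
have Xtd : forall t i, Xt t (vtx i) (vtx i) = Xt t o (vtx i).
  by move=> t i; rewrite !XtE E4.
have Xtij : forall t i j, Xt t (vtx i) (vtx j) =
    ((P t o o)^-1 * ((1 + t * nu 0 (vtx i)) * (1 + t * nu 0 (vtx j)))) * X (vtx i) (vtx j).
  by move=> t i j; rewrite XtE (E1 t (vtx i) (vtx j)) // mulrA.
have fpos : forall t i j, `|t| < eps ->
    0 < (P t o o)^-1 * ((1 + t * nu 0 (vtx i)) * (1 + t * nu 0 (vtx j))).
  move=> t i j ht; rewrite mulr_gt0 // ?invr_gt0 // mulr_gt0 //; exact: nupos.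
have Xtmem : forall t, `|t| < eps -> THset k e (Xt t).
  move=> t ht; case: k hX {hv} => /=.
  - case=> _ _ _ he; split => // i j hij; rewrite Xtij he // mulr0 //.
  - case=> [[_ _ _ he] hn]; split; first split => // i j hij; rewrite ?Xtij ?he ?mulr0 //.
    move=> i j hij hne; rewrite Xtij; apply: mulr_ge0; [exact: ltW (fpos _ _ _ ht)| exact: hn].
  - case=> _ _ _ he; split => // i j hij; rewrite Xtij; apply: mulr_ge0_le0; [exact: ltW (fpos _ _ _ ht)| exact: he].

pose D := P1 - P1 o o *: X.
have DE : forall a b, D a b = P1 a b - P1 o o * X a b by move=> a b; rewrite !mxE.
have P1s : forall a b, P1 a b = P1 b a.
  move=> a b; rewrite !P1E (hs a kk) (hs b kk) (hs a b) (eq_sym o b) (eq_sym o a); ring.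
have Dsym : Defs.symmetricmx D.
  by apply/matrixP => a b; rewrite mxE !DE P1s (hs a b).
have [s [hsn hmem]] := hv D Dsym.
have orth : forall c, c \in s -> tr_inner c D = 0.
  move=> c /hsn [_ hc].
  pose al := tr_inner c D.
  pose be := tr_inner c P2 - P2 o o * tr_inner c X.
  apply: (@quad0 _ al be eps eps0) => t ht.
  have h1 := hc _ (Xtmem t ht).
  rewrite /Xt tr_innerZr in h1.
  have hq := qpos t.
  have h2 : tr_inner c (P t) <= P t o o * tr_inner c X.
    by rewrite -ler_pdivrMl.
  rewrite /P !tr_innerDr !tr_innerZr in h2.
  rewrite PE h0 in h2.
  rewrite /al /be /D tr_innerDr tr_innerNr tr_innerZr.
  nra.
have := tr_inner_ge D o kk; rewrite (span_orth orth hmem).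
rewrite DE !P1E.
have e1 : X o kk * nu 0 kk = d by rewrite mulrC nud // hd.
rewrite e1 (hs kk o) hd nuo eqxx (eq_sym o kk) (negPf kko) h0 /= -/d.
move=> hle; have : 0 < d - d * d by nra.
nra.
Qed.
End NotVertex.
Section Main.
Variable R : realType.
Variable n : nat.
Local Notation o := (ord0 : 'I_n.+1).

Lemma one_chi_o (S : {set 'I_n}) : (one_chi S : 'cV[R]_n.+1) o 0 = 1.
Proof. by rewrite mxE unlift_none. Qed.
Lemma one_chi_v (S : {set 'I_n}) i : (one_chi S : 'cV[R]_n.+1) (vtx i) 0 = (i \in S)%:R.
Proof. by rewrite mxE /vtx liftK. Qed.

Lemma psd_outer (x : 'cV[R]_n.+1) : psdmx (x *m x^T).
Proof.
split; first by rewrite /Defs.symmetricmx trmx_mul trmxK.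
move=> v; rewrite mulmxA -mulmxA mxE big_ord1.
have -> : (v^T *m x) 0 0 = (x^T *m v) 0 0 by rewrite -[v^T *m x]trmxK trmx_mul trmxK mxE.
by rewrite -expr2 sqr_ge0.
Qed.

Lemma inC_of_stable (k : THkind) (e : rel 'I_n) (S : {set 'I_n}) :
  stable_set e S -> THset k e (one_chi S *m (one_chi S)^T : 'M[R]_n.+1).
Proof.
move=> hst.
have h00 : (one_chi S *m (one_chi S)^T : 'M[R]_n.+1) o o = 1.
  by rewrite outerE one_chi_o mulr1.
have hd : forall i, (one_chi S *m (one_chi S)^T : 'M[R]_n.+1) (vtx i) (vtx i)
   = (one_chi S *m (one_chi S)^T : 'M[R]_n.+1) o (vtx i).
  by move=> i; rewrite !outerE one_chi_o one_chi_v; case: (i \in S); rewrite ?mulr0 ?mulr1.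
have hij : forall i j, (one_chi S *m (one_chi S)^T : 'M[R]_n.+1) (vtx i) (vtx j)
   = (i \in S)%:R * (j \in S)%:R by move=> i j; rewrite outerE !one_chi_v.
have he : forall i j, e i j -> (one_chi S *m (one_chi S)^T : 'M[R]_n.+1) (vtx i) (vtx j) = 0.
  move=> i j hij'; rewrite hij.
  case hi: (i \in S); case hj: (j \in S); rewrite ?mul0r ?mulr0 //.
  by have := hst i j hi hj; rewrite hij'.
case: k => /=.
- by split => //; apply: psd_outer.
- split; first by split => //; apply: psd_outer.
  by move=> i j _ _; rewrite hij; apply: mulr_ge0; apply: ler0n.
- split => //; first by apply: psd_outer.
  by move=> i j h; rewrite he.
Qed.

Lemma THset_edge (k : THkind) (e : rel 'I_n) (X : 'M[R]_n.+1) i j :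
  THset k e X -> e i j -> X (vtx i) (vtx j) <= 0.
Proof.
case: k => /=.
- by case=> _ _ _ he /he ->.
- by case=> [[_ _ _ he]] _ /he ->.
- by case=> _ _ _ he /he.
Qed.

Lemma rank1_01 (k : THkind) (e : rel 'I_n) (X : 'M[R]_n.+1) :
  THset k e X -> \rank X = 1%N -> forall a, X o a = 0 \/ X o a = 1.
Proof.
move=> hX hr a; have hD := THset_D hX; have := rank1_prod hD hr a a.
case: (hD) => _ _ ->; move=> h.
have : X o a * (X o a - 1) = 0 by rewrite mulrBr mulr1 -h subrr.
by move/eqP; rewrite mulf_eq0 subr_eq0 => /orP[/eqP|/eqP]; auto.
Qed.
End Main.

Unset Implicit Arguments.
Set Strict Implicit.

Theorem corollary3p2 (R : realType) (n : nat) (e : rel 'I_n) (k : THkind) :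
  simple_graph e ->
  (forall X : 'M[R]_n.+1, THset k e X -> (is_vertex (THset k e) X <-> \rank X = 1%N)) /\
  (forall X : 'M[R]_n.+1,
     is_vertex (THset k e) X <->
     exists S : {set 'I_n}, stable_set e S /\ X = one_chi S *m (one_chi S)^T).
Proof.
move=> _.
have partA : forall X : 'M[R]_n.+1, THset k e X -> (is_vertex (THset k e) X <-> \rank X = 1%N).
  move=> X hX; split.
    move=> hv; case: (eqVneq (\rank X) 1%N) => // hne.
    by case: (not_vertex hX hne hv).
  move=> hr; apply: vertex_of_01; [by move=> Z; apply: THset_D | exact: hX | exact: rank1_01 hX hr].
split => // X; split.
  move=> hv; have hX := proj1 hv; have hr := (partA X hX).1 hv.
  have h01 := rank1_01 hX hr; have hD := THset_D hX.
  have hXE := rank1_prod hD hr.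
  exists [set i | X ord0 (vtx i) == 1]; split.
    move=> i j; rewrite !inE => /eqP hi /eqP hj; apply/negP => he.
    have := THset_edge hX he; rewrite hXE hi hj mulr1; lra.
  apply/matrixP => a b; rewrite outerE hXE.
  have hx : forall c, X ord0 c = (one_chi [set i | X ord0 (vtx i) == 1] : 'cV[R]_n.+1) c 0.
    move=> c; case: (unliftP ord0 c) => [i ->|->].
      rewrite one_chi_v inE; by case: (h01 (vtx i)) => ->; rewrite ?eqxx // eq_sym oner_eq0.
    by rewrite one_chi_o; case: hD.
  by rewrite !hx.
case=> S [hst ->]; apply: vertex_of_01.
- by move=> Z; apply: THset_D.
- exact: inC_of_stable.
- move=> a; rewrite outerE one_chi_o mul1r.
  case: (unliftP ord0 a) => [i ->|->]; first by rewrite one_chi_v; case: (i \in S); auto.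
  by rewrite one_chi_o; auto.
Qed.
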